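(* For all real $\nu\geq\frac{e^2}{2(e-2)}$ and all real $z$ with $0<z\leq 1$, $$K_\nu(z)<\left(\frac{\nu}{z}\right)^{\nu}.$$
   Context: $K_\nu$ denotes the modified Bessel function of the second kind of real order $\nu$, for real argument $z>0$. *)

(* Defs.v *)
From Stdlib Require Import Reals.
From Coquelicot Require Import Coquelicot.
Open Scope R_scope.

(* Modified Bessel function of the second kind of real order nu, for z > 0,
   via the standard integral representation (DLMF 10.32.9):
     K_nu(z) = \int_0^\infty exp(-z cosh t) cosh(nu t) dt. *)
Definition BesselK (nu z : R) : R :=
  RInt_gen (fun t => exp (- z * cosh t) * cosh (nu * t))
           (at_point 0) (Rbar_locally p_infty).

(* Main.v *)
Require Import Defs.
From Stdlib Require Import Reals Lra.
From Coquelicot Require Import Coquelicot.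
Open Scope R_scope.
Lemma exp_le' x y : x <= y -> exp x <= exp y.
Proof. intros [H|H]. left; now apply exp_increasing. right; now subst. Qed.

Definition cc (nu z : R) := z / (2 * nu).
Definition AA (nu z : R) := (nu - 1) * (ln (2 * nu) - 1) - (nu - 1) * ln z.
Definition gg (nu z x : R) := exp (AA nu z) * exp x * exp (- (cc nu z * exp x)).
Definition Gp (nu z x : R) := - (2 * nu / z) * exp (AA nu z) * exp (- (cc nu z * exp x)).
Definition ff (nu z x : R) := exp (- z * cosh x) * cosh (nu * x).

Lemma Gp_deriv nu z x : 0 < nu -> 0 < z -> is_derive (Gp nu z) x (gg nu z x).
Proof.
  intros Hn Hz. unfold Gp, gg, cc. auto_derive. auto. field. lra.
Qed.

Lemma ff_cont nu z x : continuous (ff nu z) x.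
Proof.
  apply (ex_derive_continuous (K:=R_AbsRing) (V:=R_NormedModule)). unfold ff, cosh. auto_derive. auto.
Qed.

Lemma gg_cont nu z x : continuous (gg nu z) x.
Proof.
  apply (ex_derive_continuous (K:=R_AbsRing) (V:=R_NormedModule)). unfold gg. auto_derive. auto.
Qed.

Lemma ff_pos nu z x : 0 <= ff nu z x.
Proof.
  unfold ff, cosh. pose proof (exp_pos (- z * ((exp x + exp (- x)) / 2))).
  pose proof (exp_pos (nu*x)). pose proof (exp_pos (-(nu*x))). nra.
Qed.

Lemma ff_bound nu z x : 1 < nu -> 0 < z -> 0 <= x -> ff nu z x <= gg nu z x.
Proof.
  intros Hn Hz Hx. unfold ff.
  assert (H1 : exp (- z * cosh x) <= exp (- z * exp x / 2)).
  { apply exp_le'. unfold cosh. pose proof (exp_pos (-x)). nra. }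
  assert (H2 : cosh (nu * x) <= exp (nu * x)).
  { unfold cosh. assert (exp (-(nu*x)) <= exp (nu*x)) by (apply exp_le'; nra). lra. }
  apply Rle_trans with (exp (- z * exp x / 2) * exp (nu * x)).
  { apply Rmult_le_compat; try lra. left; apply exp_pos.
    unfold cosh. pose proof (exp_pos (nu*x)). pose proof (exp_pos (-(nu*x))). lra. }
  unfold gg. rewrite <- !exp_plus. apply exp_le'.
  set (c := cc nu z). set (E := exp x).
  assert (Hc : 0 < c) by (unfold c, cc; apply Rdiv_lt_0_compat; lra).
  assert (HE : 0 < E) by apply exp_pos.
  assert (Hln : 1 + ln (c * E) <= c * E).
  { pose proof (exp_ineq1_le (ln (c*E))). rewrite exp_ln in H; nra. }
  rewrite ln_mult in Hln by lra. unfold E in Hln. rewrite ln_exp in Hln.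
  assert (Hlc : ln c = ln z - ln (2*nu)).
  { unfold c, cc. rewrite ln_div; lra. }
  rewrite Hlc in Hln.
  assert (Hz2 : z = 2 * nu * c) by (unfold c, cc; field; lra).
  fold E in Hln.
  assert (Hm : (nu - 1) * (1 + (ln z - ln (2 * nu) + x)) <= (nu - 1) * (c * E))
    by (apply Rmult_le_compat_l; lra).
  unfold AA. replace (- z * E / 2) with (- (nu * (c * E))) by (rewrite Hz2; field).
  lra.
Qed.

Lemma AA_K nu z : 0 < nu -> 0 < z -> 0 < 2 * nu / z * exp (AA nu z).
Proof. intros. pose proof (exp_pos (AA nu z)). apply Rmult_lt_0_compat; auto.
  apply Rdiv_lt_0_compat; lra. Qed.

Lemma cc_pos nu z : 0 < nu -> 0 < z -> 0 < cc nu z.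
Proof. intros. unfold cc. apply Rdiv_lt_0_compat; lra. Qed.

Lemma Gp_neg nu z x : 0 < nu -> 0 < z -> Gp nu z x <= 0.
Proof. intros. unfold Gp. pose proof (AA_K nu z H H0).
  pose proof (exp_pos (- (cc nu z * exp x))). nra. Qed.

Lemma Gp_lim nu z : 0 < nu -> 0 < z ->
  filterlim (Gp nu z) (Rbar_locally p_infty) (locally 0).
Proof.
  intros Hn Hz. apply (filterlim_locally (F := Rbar_locally p_infty)).
  intros eps. set (K := 2 * nu / z * exp (AA nu z)).
  set (c := cc nu z).
  assert (HK : 0 < K) by (apply AA_K; auto).
  assert (Hc : 0 < c) by (apply cc_pos; auto).
  pose proof (cond_pos eps) as He.
  exists (K / (c * eps)). intros x Hx.
  change (Rabs (Gp nu z x - 0) < eps).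
  assert (HG : Gp nu z x = - (K / exp (c * exp x))).
  { unfold Gp, K, c. rewrite exp_Ropp. field. split; [lra | apply Rgt_not_eq, exp_pos]. }
  rewrite HG, Rminus_0_r, Rabs_Ropp, Rabs_pos_eq.
  2: { apply Rlt_le, Rdiv_lt_0_compat; auto; apply exp_pos. }
  pose proof (exp_ineq1_le x). pose proof (exp_ineq1_le (c * exp x)).
  assert (K / eps < c * x).
  { apply Rmult_lt_compat_l with (r := c) in Hx; auto.
    replace (c * (K / (c * eps))) with (K / eps) in Hx by (field; lra). lra. }
  assert (c * x < c * exp x) by (apply Rmult_lt_compat_l; lra).
  apply Rmult_lt_reg_r with (exp (c * exp x)). apply exp_pos.
  unfold Rdiv. rewrite Rmult_assoc, Rinv_l, Rmult_1_r by (apply Rgt_not_eq, exp_pos).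
  assert (K < eps * (c * exp x)).
  { apply Rmult_lt_reg_r with (/ eps). apply Rinv_0_lt_compat; lra.
    replace (eps * (c * exp x) * / eps) with (c * exp x) by (field; lra).
    unfold Rdiv in H1. lra. }
  nra.
Qed.

Lemma ff_ex nu z a b : ex_RInt (ff nu z) a b.
Proof. apply (ex_RInt_continuous (V:=R_CompleteNormedModule)). intros; apply ff_cont. Qed.

Lemma gg_int nu z a b : 0 < nu -> 0 < z ->
  RInt (gg nu z) a b = Gp nu z b - Gp nu z a.
Proof.
  intros. apply is_RInt_unique. apply (is_RInt_derive (V:=R_CompleteNormedModule) (Gp nu z) (gg nu z)).
  intros; apply Gp_deriv; auto. intros; apply gg_cont.
Qed.

Lemma ff_int nu z : 1 < nu -> 0 < z ->
  exists l, is_RInt_gen (ff nu z) (at_point 0) (Rbar_locally p_infty) l.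
Proof.
  intros Hn Hz.
  set (F := fun b => RInt (ff nu z) 0 b).
  set (H := filtermap F (Rbar_locally p_infty)).
  assert (PH : ProperFilter H).
  { apply filtermap_proper_filter. apply Rbar_locally_filter. }
  assert (CH : cauchy H).
  { intros eps.
    destruct (proj1 (filterlim_locally (F := Rbar_locally p_infty) (Gp nu z) 0) (Gp_lim nu z ltac:(lra) Hz) eps) as [M HM].
    set (M1 := Rmax M 0 + 1).
    assert (HM1 : M < M1 /\ 0 < M1) by (unfold M1; pose proof (Rmax_l M 0); pose proof (Rmax_r M 0); lra).
    exists (F M1). exists M1. intros b Hb.
    change (Rabs (F b - F M1) < eps).
    assert (E : F b - F M1 = RInt (ff nu z) M1 b).
    { unfold F. rewrite <- (RInt_Chasles (ff nu z) 0 M1 b) by apply ff_ex.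
      unfold plus; simpl; ring. }
    rewrite E.
    assert (0 <= RInt (ff nu z) M1 b).
    { apply RInt_ge_0. lra. apply ff_ex. intros; apply ff_pos. }
    assert (RInt (ff nu z) M1 b <= RInt (gg nu z) M1 b).
    { apply RInt_le. lra. apply ff_ex. apply (ex_RInt_continuous (V:=R_CompleteNormedModule)); intros; apply gg_cont.
      intros; apply ff_bound; lra. }
    rewrite gg_int in H1 by lra.
    pose proof (Gp_neg nu z b ltac:(lra) Hz).
    specialize (HM M1 (proj1 HM1)). change (Rabs (Gp nu z M1 - 0) < eps) in HM.
    rewrite Rabs_pos_eq by lra.
    rewrite Rminus_0_r in HM.
    assert (- Gp nu z M1 < eps) by (pose proof (Rabs_Ropp (Gp nu z M1)); pose proof (Rle_abs (- Gp nu z M1)); lra).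
    lra. }
  exists (lim H).
  intros P [eps HP].
  destruct (complete_cauchy (T := R_CompleteSpace) H PH CH eps) as [M HM].
  apply Filter_prod with (fun a => a = 0) (fun b => M < b).
  reflexivity. exists M; auto.
  intros a b -> Hb. exists (F b). split.
  apply (RInt_correct (V:=R_CompleteNormedModule)), ff_ex. apply HP, HM, Hb.
Qed.

Lemma ln2_le : ln 2 <= 3/4.
Proof.
  set (h := exp (1/8)).
  assert (Hh : 9/8 <= h) by (unfold h; pose proof (exp_ineq1_le (1/8)); lra).
  assert (E : exp (3/4) = h^6).
  { unfold h. replace (3/4) with (1/8+1/8+1/8+1/8+1/8+1/8) by lra.
    rewrite !exp_plus. simpl. ring. }
  assert (2 <= exp (3/4)).
  { rewrite E. apply Rle_trans with ((9/8)^6). simpl; lra. apply pow_incr; lra. }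
  rewrite <- (ln_exp (3/4)). apply ln_le; lra.
Qed.

Lemma final_num nu z : 4 <= nu -> 0 < z ->
  2 * nu / z * exp (AA nu z) <= Rpower (nu / z) nu.
Proof.
  intros Hn Hz. unfold Rpower.
  replace (2 * nu / z) with (exp (ln (2 * nu / z))) by (apply exp_ln; apply Rdiv_lt_0_compat; lra).
  rewrite <- exp_plus. apply exp_le'.
  rewrite !ln_div by lra. unfold AA. rewrite ln_mult by lra.
  pose proof ln2_le.
  assert (nu * ln 2 <= nu * (3/4)) by (apply Rmult_le_compat_l; lra).
  lra.
Qed.

Theorem mainTheorem6 (nu z : R) :
  exp 1 ^ 2 / (2 * (exp 1 - 2)) <= nu ->
  0 < z -> z <= 1 ->
  BesselK nu z < Rpower (nu / z) nu.
Proof.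
  intros Hnu Hz Hz1. unfold BesselK.
  assert (He : 2 < exp 1) by (pose proof (exp_ineq1 1 ltac:(lra)); lra).
  assert (H4 : 4 <= nu).
  { apply Rle_trans with (exp 1 ^ 2 / (2 * (exp 1 - 2))); auto.
    apply Rmult_le_reg_r with (2 * (exp 1 - 2)). lra.
    unfold Rdiv. rewrite Rmult_assoc, Rinv_l, Rmult_1_r by lra. pose proof (pow2_ge_0 (exp 1 - 4)). nra. }
  destruct (ff_int nu z ltac:(lra) Hz) as [l Hl].
  change (RInt_gen (ff nu z) (at_point 0) (Rbar_locally p_infty) < Rpower (nu / z) nu).
  rewrite (is_RInt_gen_unique _ l Hl).
  assert (Hg : is_RInt_gen (gg nu z) (at_point 0) (Rbar_locally p_infty) (0 - Gp nu z 0)).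
  { apply is_RInt_gen_ext with (Derive (Gp nu z)).
    - apply Filter_prod with (fun _ => True) (fun _ => True); try easy.
      exact (ex_intro _ 0 (fun _ _ => I)).
      intros a b _ _ x _. apply is_derive_unique, Gp_deriv; lra.
    - apply is_RInt_gen_Derive.
      + apply Filter_prod with (fun _ => True) (fun _ => True); try easy.
        exact (ex_intro _ 0 (fun _ _ => I)).
        intros a b _ _ x _. eexists. apply Gp_deriv; lra.
      + apply Filter_prod with (fun _ => True) (fun _ => True); try easy.
        exact (ex_intro _ 0 (fun _ _ => I)).
        intros a b _ _ x _. apply continuous_ext with (gg nu z).
        intros; symmetry; apply is_derive_unique, Gp_deriv; lra.
        apply gg_cont.
      + intros P HP. exact (locally_singleton _ _ HP).
      + apply Gp_lim; lra. }
  assert (Hn : norm l <= 0 - Gp nu z 0).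
  { apply (RInt_gen_norm (Fa := at_point 0) (Fb := Rbar_locally p_infty) (ff nu z) (gg nu z) l _ ) ; auto.
    - apply (Filter_prod _ _ _ (fun a => a = 0) (fun b => 0 < b)). reflexivity.
      exists 0; auto. intros a b -> Hb; simpl; lra.
    - apply (Filter_prod _ _ _ (fun a => a = 0) (fun b => 0 < b)). reflexivity.
      exists 0; auto. intros a b -> Hb x Hx; simpl in Hx.
      change (Rabs (ff nu z x) <= gg nu z x). rewrite Rabs_pos_eq by apply ff_pos.
      apply ff_bound; lra. }
  change (Rabs l <= 0 - Gp nu z 0) in Hn.
  pose proof (Rle_abs l).
  pose proof (final_num nu z H4 Hz).
  assert (0 - Gp nu z 0 < 2 * nu / z * exp (AA nu z)).
  { unfold Gp. rewrite exp_0, Rmult_1_r.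
    pose proof (AA_K nu z ltac:(lra) Hz).
    assert (exp (- cc nu z) < 1).
    { rewrite <- exp_0. apply exp_increasing. pose proof (cc_pos nu z ltac:(lra) Hz). lra. }
    nra. }
  lra.
Qed.
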